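(* Let $G_\bullet/\Gamma$ be a nilmanifold of length $d$ and let $r\le d$. Define $\tilde G_i=G_r$ for $i\le r$ and $\tilde G_i=G_i$ for $i\ge r$, and $\tilde\Gamma=G_r\cap\Gamma$. Let $\iota:G_r/(G_r\cap\Gamma)\to G/\Gamma$ be the inclusion $g(G_r\cap\Gamma)\mapsto g\Gamma$. Then $\bar h\mapsto\iota\circ\bar h$ is a bijection from $\mathrm{poly}(\mathscr F_\emptyset\to\tilde G_\bullet/\tilde\Gamma)$ onto the set of those $\bar f\in\mathrm{poly}(\mathscr F_\emptyset\to G_\bullet/\Gamma)$ which take values in $G_r\Gamma=\{g\Gamma:g\in G_r\}\subset G/\Gamma$.
   Context: $\mathscr F$ is the family of finite non-empty subsets of $\mathbb N=\{1,2,\dots\}$, $\mathscr F_\emptyset=\mathscr F\cup\{\emptyset\}$. A prefiltration $G_\bullet$ on a nilpotent Lie group $G$: Lie subgroups $G=G_0\supseteq G_1\supseteq\cdots$ with $[G_i,G_j]\subseteq G_{i+j}$ and $G_{d+1}=\{e\}$ ($d$ minimal = length); a filtration if also $G_0=G_1=G$; $G_{\bullet+1}$ is $i\mapsto G_{i+1}$. If $\Gamma<G$ is discrete cocompact and each $G_i\cap\Gamma$ is cocompact in $G_i$, $G_\bullet/\Gamma$ is a nilmanifold of length $d$. $g:\mathscr F_\emptyset\to G$ is in $\mathrm{poly}(\mathscr F_\emptyset\to G_\bullet)$ if either $G_0=\{e\}$ and $g\equiv e$, or for each $\beta\in\mathscr F_\emptyset$ there is $D_\beta g\in\mathrm{poly}(\mathscr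 F_\emptyset\to G_{\bullet+1})$ with $D_\beta g(\alpha)=g(\alpha)^{-1}g(\alpha\cup\beta)$ whenever $\alpha\cap\beta=\emptyset$; for a prefiltration $H_\bullet$ with discrete cocompact $\Lambda<H_0$, $\mathrm{poly}(\mathscr F_\emptyset\to H_\bullet/\Lambda)$ consists of the maps $\alpha\mapsto g(\alpha)\Lambda$ with $g\in\mathrm{poly}(\mathscr F_\emptyset\to H_\bullet)$. *)

(* Defs.v *)
From Stdlib Require List.
From mathcomp Require Import all_boot.
Set Implicit Arguments. Unset Strict Implicit. Unset Printing Implicit Defensive.

(* F_emptyset : finite subsets of N = {1,2,...}, including the empty set,
   represented canonically as strictly increasing lists of positive naturals. *)
Definition fs_ok (s : seq nat) : bool := sorted ltn s && all (leq 1) s.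
Definition FS := {s : seq nat | fs_ok s}.

Definition fs0 : FS := exist (fun s => is_true (fs_ok s)) [::] isT.

Lemma fsU_ok (a b : FS) :
  fs_ok (sort leq (undup (proj1_sig a ++ proj1_sig b))).
Proof.
rewrite /fs_ok ltn_sorted_uniq_leq sort_uniq undup_uniq (sort_sorted leq_total) /=.
rewrite all_sort; apply/allP => x; rewrite mem_undup mem_cat.
case: a b => [a /andP[_ /allP Ha]] [b /andP[_ /allP Hb]] /= /orP[/Ha|/Hb] //.
Qed.

Definition fsU (a b : FS) : FS := exist (fun s => is_true (fs_ok s)) _ (fsU_ok a b).
Definition fs_mem (x : nat) (a : FS) : bool := x \in proj1_sig a.
Definition fs_disjoint (a b : FS) : Prop :=
  forall x, fs_mem x a -> fs_mem x b -> False.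

Record group := Group {
  gT :> Type;
  gmul : gT -> gT -> gT;
  ginv : gT -> gT;
  gone : gT;
  gmulA : forall x y z, gmul x (gmul y z) = gmul (gmul x y) z;
  gmul1 : forall x, gmul gone x = x;
  gmulV : forall x, gmul (ginv x) x = gone
}.

Section GroupDefs.
Variable G : group.
Local Notation "x * y" := (gmul x y).
Local Notation "x ^-1" := (ginv x).
Local Notation e := (gone G).

Definition is_subgroup (H : G -> Prop) : Prop :=
  H e /\ (forall x y, H x -> H y -> H (x * y)) /\ (forall x, H x -> H (x^-1)).

Definition commutator (x y : G) : G := x^-1 * y^-1 * x * y.

Definition prefiltration (Gs : nat -> G -> Prop) : Prop :=
  (forall x, Gs 0 x) /\
  (forall i, is_subgroup (Gs i)) /\
  (forall i x, Gs i.+1 x -> Gs i x) /\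
  (forall i j x y, Gs i x -> Gs j y -> Gs (i + j) (commutator x y)).

Definition prefiltration_length (Gs : nat -> G -> Prop) (d : nat) : Prop :=
  (forall x, Gs d.+1 x -> x = e) /\
  (forall k, k < d -> exists x, Gs k.+1 x /\ x <> e).

(* poly(F_∅ -> H_•) where H_• = Hs is a prefiltration on the group Hs 0
   (a map F_∅ -> H_0); defined inductively (least fixed point). *)
Inductive poly : (nat -> G -> Prop) -> (FS -> G) -> Prop :=
| poly_triv (Hs : nat -> G -> Prop) (g : FS -> G) :
    (forall x, Hs 0 x <-> x = e) -> (forall a, g a = e) -> poly Hs g
| poly_step (Hs : nat -> G -> Prop) (g : FS -> G) :
    (forall a, Hs 0 (g a)) ->
    (forall b, exists Dg : FS -> G,
        poly (fun i => Hs i.+1) Dg /\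
        forall a, fs_disjoint a b -> Dg a = (g a)^-1 * g (fsU a b)) ->
    poly Hs g.

(* points of the homogeneous space: left coset g Λ, as a subset of G *)
Definition coset (L : G -> Prop) (g : G) : G -> Prop :=
  fun x => exists l, L l /\ x = g * l.

Definition poly_quot (Hs : nat -> G -> Prop) (L : G -> Prop)
  (fbar : FS -> (G -> Prop)) : Prop :=
  exists g, poly Hs g /\ forall a, fbar a = coset L (g a).

(* the map G_r/(G_r ∩ Γ) -> G/Γ, g(G_r∩Γ) ↦ gΓ, on cosets viewed as sets *)
Definition coset_incl (Gam : G -> Prop) (c : G -> Prop) : G -> Prop :=
  fun x => exists y, c y /\ coset Gam y x.

Definition topology (opens : (G -> Prop) -> Prop) : Prop :=
  opens (fun _ => True) /\ opens (fun _ => False) /\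
  (forall U V, opens U -> opens V -> opens (fun x => U x /\ V x)) /\
  (forall (I : Type) (U : I -> G -> Prop), (forall i, opens (U i)) ->
     opens (fun x => exists i, U i x)).

Definition hausdorff (opens : (G -> Prop) -> Prop) : Prop :=
  forall x y, x <> y -> exists U V, opens U /\ opens V /\ U x /\ V y /\
    forall z, U z -> V z -> False.

Definition topological_group (opens : (G -> Prop) -> Prop) : Prop :=
  topology opens /\ hausdorff opens /\
  (forall W x y, opens W -> W (x * y) ->
     exists U V, opens U /\ opens V /\ U x /\ V y /\
       forall u v, U u -> V v -> W (u * v)) /\
  (forall W x, opens W -> W (x^-1) ->
     exists U, opens U /\ U x /\ forall u, U u -> W (u^-1)).

Definition compact (opens : (G -> Prop) -> Prop) (K : G -> Prop) : Prop :=
  forall (I : Type) (U : I -> G -> Prop), (forall i, opens (U i)) ->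
    (forall x, K x -> exists i, U i x) ->
    exists l : list I, forall x, K x -> exists i, List.In i l /\ U i x.

Definition discrete_subset (opens : (G -> Prop) -> Prop) (L : G -> Prop) : Prop :=
  forall l, L l -> exists U, opens U /\ U l /\ forall y, U y -> L y -> y = l.

Definition cocompact_in (opens : (G -> Prop) -> Prop) (H L : G -> Prop) : Prop :=
  (forall l, L l -> H l) /\
  exists K, compact opens K /\ (forall k, K k -> H k) /\
    forall h, H h -> exists k l, K k /\ L l /\ h = k * l.

Definition nilmanifold (opens : (G -> Prop) -> Prop) (Gs : nat -> G -> Prop)
  (Gam : G -> Prop) : Prop :=
  topological_group opens /\ prefiltration Gs /\
  is_subgroup Gam /\ discrete_subset opens Gam /\
  cocompact_in opens (fun _ => True) Gam /\
  (forall i, cocompact_in opens (Gs i) (fun x => Gs i x /\ Gam x)).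

End GroupDefs.

(* Main.v *)
Require Import Defs.
From mathcomp Require Import all_boot.
From Stdlib Require Import FunctionalExtensionality PropExtensionality IndefiniteDescription.
Set Implicit Arguments. Unset Strict Implicit. Unset Printing Implicit Defensive.

Fixpoint poly_ind' (G : group) (Q : (nat -> G -> Prop) -> (FS -> G) -> Prop)
 (Ht : forall Hs g, (forall x, Hs 0 x <-> x = gone G) -> (forall a, g a = gone G) -> Q Hs g)
 (Hst : forall Hs g, (forall a, Hs 0 (g a)) ->
    (forall b, exists Dg, poly (fun i => Hs i.+1) Dg /\ Q (fun i => Hs i.+1) Dg /\
        forall a, fs_disjoint a b -> Dg a = gmul (ginv (g a)) (g (fsU a b))) -> Q Hs g)
 Hs g (p : poly Hs g) {struct p} : Q Hs g :=
 match p with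
 | poly_triv Hs g h1 h2 => Ht Hs g h1 h2
 | poly_step Hs g h1 h2 => Hst Hs g h1 (fun b => match h2 b with
      ex_intro Dg (conj pD eq) => ex_intro _ Dg (conj pD (conj (@poly_ind' G Q Ht Hst _ _ pD) eq)) end)
 end.

Section GroupLemmas.
Variable G : group.
Local Notation "x ** y" := (gmul x y) (at level 40, left associativity).
Local Notation e := (gone G).

Lemma mulgA' (x y z : G) : x ** y ** z = x ** (y ** z). Proof. by rewrite gmulA. Qed.

Lemma mulgV' (x : G) : x ** ginv x = e.
Proof.
have H : forall y : G, y ** y = y -> y = e.
  move=> y Hy; have : ginv y ** (y ** y) = ginv y ** y by rewrite Hy.
  by rewrite gmulA gmulV gmul1.
apply: H; by rewrite -gmulA [ginv x ** _]gmulA gmulV gmul1.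
Qed.

Lemma mulg1 (x : G) : x ** e = x.
Proof. by rewrite -(gmulV x) gmulA mulgV' gmul1. Qed.

Lemma mulKg (x y : G) : ginv x ** (x ** y) = y.
Proof. by rewrite gmulA gmulV gmul1. Qed.

Lemma mulVKg (x y : G) : x ** (ginv x ** y) = y.
Proof. by rewrite gmulA mulgV' gmul1. Qed.

Lemma inv_uniq (x y : G) : x ** y = e -> ginv x = y.
Proof. move=> H; by rewrite -(mulg1 (ginv x)) -H mulKg. Qed.

Lemma invgK (x : G) : ginv (ginv x) = x.
Proof. apply: inv_uniq; exact: gmulV. Qed.

Lemma invMg (x y : G) : ginv (x ** y) = ginv y ** ginv x.
Proof. apply: inv_uniq; by rewrite mulgA' mulVKg mulgV'. Qed.

Lemma inv1g : ginv e = e.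
Proof. apply: inv_uniq; exact: gmul1. Qed.

Lemma mul_cancel_l (x y z : G) : x ** y = x ** z -> y = z.
Proof. move=> H; by rewrite -(mulKg x y) H mulKg. Qed.

End GroupLemmas.

Ltac gnorm := repeat progress rewrite ?mulgA' ?invMg ?invgK ?inv1g ?gmul1 ?mulg1 ?gmulV ?mulgV' ?mulKg ?mulVKg.




Lemma fs_ext (a b : FS) : (forall x, fs_mem x a = fs_mem x b) -> a = b.
Proof.
move: a b => [s Hs] [t Ht]; rewrite /fs_mem /= => H.
have E : s = t.
  apply: (irr_sorted_eq (leT:=ltn)).
  - exact: ltn_trans.
  - exact: ltnn.
  - by case/andP: Hs.
  - by case/andP: Ht.
  - exact: H.
subst t; congr exist; exact: bool_irrelevance.
Qed.

Lemma fs_memU x a b : fs_mem x (fsU a b) = fs_mem x a || fs_mem x b.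
Proof. by rewrite /fs_mem /fsU /= mem_sort mem_undup mem_cat. Qed.

Lemma fs_filt_ok (P : pred nat) (a : FS) : fs_ok (filter P (proj1_sig a)).
Proof.
case: a => s /andP[Hs Ha] /=; rewrite /fs_ok (sorted_filter ltn_trans) //=.
apply/allP => x; rewrite mem_filter => /andP[_]; move/allP: Ha; apply.
Qed.

Definition fs_filt (P : pred nat) (a : FS) : FS :=
  exist (fun s => is_true (fs_ok s)) _ (fs_filt_ok P a).

Lemma fs_memF x P a : fs_mem x (fs_filt P a) = P x && fs_mem x a.
Proof. by rewrite /fs_mem /= mem_filter. Qed.

Lemma fs_mem0 x : fs_mem x fs0 = false.
Proof. by []. Qed.

Lemma fs1_ok (n : nat) : fs_ok (if 0 < n then [:: n] else [::]).
Proof. by case: n. Qed.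

Definition fs1 (n : nat) : FS := exist (fun s => is_true (fs_ok s)) _ (fs1_ok n).

Lemma fs_mem1 x n : fs_mem x (fs1 n) = (0 < n) && (x == n).
Proof. rewrite /fs_mem /=; case: n => //= n; by rewrite inE. Qed.

Lemma fs_pos x a : fs_mem x a -> 0 < x.
Proof. case: a => s Hs; rewrite /fs_mem /=; case/andP: Hs => _ /allP H; exact: H. Qed.

Lemma fs_disjP a b : fs_disjoint a b <-> (forall x, fs_mem x a -> fs_mem x b = false).
Proof.
split=> H x.
  move=> Ha; case Hb: (fs_mem x b) => //; exfalso; exact: H x Ha Hb.
move=> Ha Hb; by rewrite H in Hb.
Qed.

Definition fs_le (a : FS) n := all (fun x => x <= n) (proj1_sig a).
Definition fsb (a : FS) := foldr maxn 0 (proj1_sig a).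

Lemma fs_leP a n : fs_le a n <-> (forall x, fs_mem x a -> x <= n).
Proof. rewrite /fs_le; split => [/allP H x Hx | H]; [exact: H | exact/allP]. Qed.

Lemma fs_le_b a : fs_le a (fsb a).
Proof.
apply/fs_leP; rewrite /fs_mem /fsb; case: a => s _ /=.
elim: s => //= y s IH x; rewrite inE => /orP[/eqP->|/IH]; first exact: leq_maxl.
move=> H; apply: (leq_trans H); exact: leq_maxr.
Qed.

Definition psi (X : pred nat) (c : FS) (a : FS) : FS := fsU (fs_filt X a) c.

Lemma psi_mem x (X : pred nat) c a : fs_mem x (psi X c a) = X x && fs_mem x a || fs_mem x c.
Proof. by rewrite /psi fs_memU fs_memF. Qed.

Lemma psi_disj (X : pred nat) c a b : fs_disjoint a b ->
  fs_disjoint (psi X c a) (fs_filt (fun x => X x && ~~ fs_mem x c) b).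
Proof.
move/fs_disjP=> H; apply/fs_disjP => x; rewrite psi_mem fs_memF.
case Hc: (fs_mem x c); first by rewrite andbF.
rewrite orbF => /andP[_ Ha]; by rewrite H // !andbF.
Qed.

Lemma psi_U (X : pred nat) c a b :
  fsU (psi X c a) (fs_filt (fun x => X x && ~~ fs_mem x c) b) = psi X c (fsU a b).
Proof.
apply: fs_ext => x; rewrite fs_memU !psi_mem fs_memF fs_memU.
by case: (X x); case: (fs_mem x a); case: (fs_mem x b); case: (fs_mem x c).
Qed.

Lemma psi_id (X : pred nat) a : (forall x, fs_mem x a -> X x) -> psi X fs0 a = a.
Proof.
move=> H; apply: fs_ext => x; rewrite psi_mem fs_mem0 orbF.
by case Ha: (fs_mem x a); rewrite ?andbF // (H x Ha).
Qed.

Lemma psi_comp0 (X : pred nat) a b :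
  psi X fs0 (fsU a b) = psi X (psi X fs0 b) a.
Proof.
apply: fs_ext => x; rewrite !psi_mem fs_memU fs_mem0.
by case: (X x); case: (fs_mem x a); case: (fs_mem x b).
Qed.

Lemma fs_le_memP a n : fs_le a n -> forall x, fs_mem x a -> x <= n.
Proof. by move/fs_leP. Qed.

Lemma fs_leU a b n : fs_le a n -> fs_le b n -> fs_le (fsU a b) n.
Proof.
move/fs_leP=> Ha /fs_leP Hb; apply/fs_leP => x; rewrite fs_memU => /orP[/Ha|/Hb] //.
Qed.

Lemma fs_le_psi (X : pred nat) c a n : fs_le a n -> fs_le c n -> fs_le (psi X c a) n.
Proof.
move/fs_leP=> Ha /fs_leP Hc; apply/fs_leP => x; rewrite psi_mem => /orP[/andP[_ /Ha]|/Hc] //.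
Qed.

Lemma fs_le_mono a n m : n <= m -> fs_le a n -> fs_le a m.
Proof. move=> Hnm /fs_leP H; apply/fs_leP => x /H Hx; exact: leq_trans Hx Hnm. Qed.

Lemma fsb_le a n : fs_le a n -> fsb a <= n.
Proof.
rewrite /fs_le /fsb; case: a => s _ /=; elim: s => //= y s IH /andP[Hy Hs].
by rewrite geq_max Hy IH.
Qed.

Lemma down_ind (d : nat) (R : nat -> Prop) :
  (forall k, d < k -> R k) ->
  (forall k, k <= d -> (forall k', k < k' -> R k') -> R k) -> forall k, R k.
Proof.
move=> Hb Hs.
suff H : forall n k, d < n + k -> R k.
  move=> k; apply: (H d.+1 k); by rewrite ltn_addr.
elim=> [|n IH] k Hk; first exact: Hb.
case: (ltnP d k) => Hdk; first exact: Hb.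
apply: Hs => // k' Hk'; apply: IH.
by apply: (leq_trans Hk); rewrite addSnnS leq_add2l.
Qed.

Section Filt.
Variable G : group.
Local Notation "x ** y" := (gmul x y) (at level 40, left associativity).
Local Notation e := (gone G).
Variable Gs : nat -> G -> Prop.
Variable d : nat.
Hypothesis HG : prefiltration Gs.
Hypothesis Hd : forall x, Gs d.+1 x -> x = e.

Lemma Gs_all x : Gs 0 x. Proof. by case: HG => H _; apply: H. Qed.
Lemma Gs_e i : Gs i e. Proof. by case: HG => _ [H _]; case: (H i). Qed.
Lemma Gs_mul i x y : Gs i x -> Gs i y -> Gs i (x ** y).
Proof. by case: HG => _ [H _]; case: (H i) => _ [H2 _]; apply: H2. Qed.
Lemma Gs_inv i x : Gs i x -> Gs i (ginv x).
Proof. by case: HG => _ [H _]; case: (H i) => _ [_ H2]; apply: H2. Qed.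
Lemma Gs_mono i j x : i <= j -> Gs j x -> Gs i x.
Proof.
move=> Hij; rewrite -(subnKC Hij); elim: (j - i) => [|n IH]; first by rewrite addn0.
move=> H; apply: IH; case: HG => _ [_ [Hm _]]; apply: Hm; by rewrite -addnS.
Qed.
Lemma Gs_comm i j x y : Gs i x -> Gs j y -> Gs (i + j) (commutator x y).
Proof. by case: HG => _ [_ [_ H]]; apply: H. Qed.
Lemma Gs_conj i x y : Gs i x -> Gs i (ginv y ** x ** y).
Proof.
move=> Hx; have H := Gs_comm Hx (Gs_all y); rewrite addn0 in H.
have -> : ginv y ** x ** y = x ** commutator x y by rewrite /commutator; gnorm.
exact: Gs_mul.
Qed.
Lemma Gs_triv k x : d < k -> Gs k x -> x = e.
Proof. move=> Hk Hx; apply: Hd; exact: Gs_mono Hk Hx. Qed.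

Definition P k (g : FS -> G) := poly (fun i => Gs (i + k)) g.

Lemma shiftE k : (fun i => Gs (i.+1 + k)) = (fun i => Gs (i + k.+1)).
Proof. apply: functional_extensionality => i; by rewrite addSnnS. Qed.

Lemma P_intro k g : (forall a, Gs k (g a)) ->
  (forall b, exists D, P k.+1 D /\ forall a, fs_disjoint a b -> D a = ginv (g a) ** g (fsU a b)) ->
  P k g.
Proof.
move=> Hv HD; apply: poly_step => [a|b] /=; first by rewrite ?add0n.
by case: (HD b) => D [HP Heq]; exists D; rewrite shiftE.
Qed.

Lemma P_const k c : Gs k c -> P k (fun _ => c).
Proof.
elim/(down_ind (d:=d)): k c => [k Hk|k Hk IH] c Hc.
  have Ec := Gs_triv Hk Hc; apply: poly_triv => [x|a //].
  rewrite ?add0n; split; [exact: Gs_triv | move->; exact: Gs_e].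
apply: P_intro => // b; exists (fun _ => e); split; first exact: IH (Gs_e _).
by move=> a _; rewrite gmulV.
Qed.

Lemma P_ext k g g' : (forall a, g a = g' a) -> P k g -> P k g'.
Proof. by move=> H; have -> : g' = g by apply: functional_extensionality. Qed.

Lemma P_e k g : (forall a, g a = e) -> P k g.
Proof. move=> H; apply: (P_ext (g := fun _ => e)) => // ; exact: P_const (Gs_e _). Qed.

Lemma poly_cases Hs g : poly Hs g ->
  ((forall x, Hs 0 x <-> x = e) /\ (forall a, g a = e)) \/
  ((forall a, Hs 0 (g a)) /\ forall b, exists D, poly (fun i => Hs i.+1) D /\
     forall a, fs_disjoint a b -> D a = ginv (g a) ** g (fsU a b)).
Proof. case=> {}Hs {}g H1 H2; [left|right]; by split. Qed.

Lemma P_val k g a : P k g -> Gs k (g a).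
Proof.
case/poly_cases=> [[_ H2]|[H1 _]].
- rewrite H2; exact: Gs_e.
- move: (H1 a); by rewrite ?add0n.
Qed.

Lemma P_char k g : P k g -> forall b, exists D, P k.+1 D /\
  forall a, fs_disjoint a b -> D a = ginv (g a) ** g (fsU a b).
Proof.
case/poly_cases=> [[_ H2]|[_ H2]] b.
- exists (fun _ => e); split; first exact: P_const (Gs_e _).
  by move=> a _; rewrite !H2 gmulV.
- case: (H2 b) => D [HP Heq]; exists D; split => //; by rewrite /P -shiftE.
Qed.

Lemma poly_to_P (Hs : nat -> G -> Prop) g : poly Hs g ->
  forall b, (forall i x, Hs i x -> Gs (i + b) x) -> P b g.
Proof.
move: Hs g; apply: (@poly_ind' G (fun Hs g => forall b, (forall i x, Hs i x -> Gs (i + b) x) -> P b g)).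
  move=> Hs g _ Hg b _; exact: P_e.
move=> Hs g H1 H2 b Hsub; apply: P_intro => [a|beta].
  by have := Hsub 0 _ (H1 a); rewrite ?add0n.
case: (H2 beta) => D [_ [IH Heq]]; exists D; split => //.
apply: IH => i x Hx; have := Hsub i.+1 x Hx; by rewrite addSnnS.
Qed.

Lemma P_mono a b g : b <= a -> P a g -> P b g.
Proof.
move=> Hab Hg; apply: (poly_to_P Hg) => i x; apply: Gs_mono; by rewrite leq_add2l.
Qed.


Definition pmul (x y : FS -> G) : FS -> G := fun a => x a ** y a.
Definition pcomm (x y : FS -> G) : FS -> G := fun a => commutator (x a) (y a).
Definition pconj (z w : FS -> G) : FS -> G := pmul z (pcomm z w).

Inductive Sx : nat -> (FS -> G) -> Prop :=
| Sx_atom k g : P k g -> Sx k g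
| Sx_mul k x y : Sx k x -> Sx k y -> Sx k (pmul x y)
| Sx_comm i j x y : Sx i x -> Sx j y -> Sx (i + j) (pcomm x y)
| Sx_mono k k' x : k' <= k -> Sx k x -> Sx k' x.

Lemma Sx_conj m l z w : Sx m z -> Sx l w -> Sx m (pconj z w).
Proof.
move=> Hz Hw; apply: Sx_mul => //; apply: (Sx_mono (k := m + l)); first exact: leq_addr.
exact: Sx_comm.
Qed.

Lemma Sx_val k g a : Sx k g -> Gs k (g a).
Proof.
elim=> {k g} [k g Hg|k x y _ Hx _ Hy|i j x y _ Hx _ Hy|k k' x Hk _ Hx].
- exact: P_val.
- exact: Gs_mul.
- exact: Gs_comm.
- exact: Gs_mono Hk Hx.
Qed.

Lemma Sx_der k g : Sx k g -> forall b, exists D, Sx k.+1 D /\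
  forall a, fs_disjoint a b -> D a = ginv (g a) ** g (fsU a b).
Proof.
elim=> {k g} [k g Hg|k x y Sxx Hx Syy Hy|i j x y Sxx Hx Syy Hy|k k' x Hk _ Hx] b.
- case: (P_char Hg b) => D [HD Heq]; exists D; split => //; exact: Sx_atom.
- case: (Hx b) => A [HA EA]; case: (Hy b) => B [HB EB].
  exists (pmul (pmul A (pcomm A y)) B); split.
    apply: Sx_mul => //; apply: Sx_mul => //.
    apply: (Sx_mono (k := k.+1 + k)); first exact: leq_addr.
    exact: Sx_comm.
  move=> a Hab; rewrite /pmul /pcomm EA // EB // /commutator; gnorm; reflexivity.
- case: (Hx b) => A [HA EA]; case: (Hy b) => B [HB EB].
  have Hc : Sx (i + j) (pcomm x y) by apply: Sx_comm.
  exists (pmul (pmul (pmul (pmul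
     (pconj (pconj (pcomm x B) A) (pcomm x y))
     (pcomm (pcomm x y) A))
     (pconj (pcomm (pcomm x y) B) A))
     (pcomm A B))
     (pconj (pcomm A y) B)); split.
    apply: Sx_mul; [apply: Sx_mul; [apply: Sx_mul; [apply: Sx_mul|]|]|].
    + apply: Sx_conj Hc; apply: Sx_conj HA.
      apply: (Sx_mono (k := i + j.+1)); first by rewrite addnS.
      exact: Sx_comm.
    + apply: (Sx_mono (k := i + j + i.+1)); first by rewrite addnS ltnS leq_addr.
      exact: Sx_comm.
    + apply: Sx_conj HA.
      apply: (Sx_mono (k := i + j + j.+1)); first by rewrite addnS ltnS leq_addr.
      exact: Sx_comm.
    + apply: (Sx_mono (k := i.+1 + j.+1)); first by rewrite addSn ltnS leq_add2l.
      exact: Sx_comm.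
    + apply: Sx_conj HB.
      apply: (Sx_mono (k := i.+1 + j)); first by rewrite addSn.
      exact: Sx_comm.
  move=> a Hab; rewrite /pconj /pmul /pcomm EA // EB // /commutator; gnorm; reflexivity.
- case: (Hx b) => D [HD Heq]; exists D; split => //.
  apply: (Sx_mono (k := k.+1)) => //.
Qed.

Lemma Sx_P k g : Sx k g -> P k g.
Proof.
elim/(down_ind (d:=d)): k g => [k Hk|k Hk IH] g Hg.
  apply: P_e => a; apply: (Gs_triv Hk); exact: Sx_val.
apply: P_intro => [a|b]; first exact: Sx_val.
case: (Sx_der Hg b) => D [HD Heq]; exists D; split => //; exact: IH.
Qed.

Lemma P_mul k x y : P k x -> P k y -> P k (pmul x y).
Proof. move=> Hx Hy; apply: Sx_P; apply: Sx_mul; exact: Sx_atom. Qed.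

Lemma P_comm i j x y : P i x -> P j y -> P (i + j) (pcomm x y).
Proof. move=> Hx Hy; apply: Sx_P; apply: Sx_comm; exact: Sx_atom. Qed.


Lemma P_triv_e k g a : d < k -> P k g -> g a = e.
Proof. move=> Hk Hg; apply: (Gs_triv Hk); exact: P_val. Qed.

Lemma P_comp k u (X : pred nat) c : P k u -> P k (fun a => u (psi X c a)).
Proof.
elim/(down_ind (d:=d)): k u => [k Hk|k Hk IH] u Hu.
  apply: P_e => a; exact: (P_triv_e _ Hk Hu).
apply: P_intro => [a|b]; first exact: P_val.
case: (P_char Hu (fs_filt (fun x => X x && ~~ fs_mem x c) b)) => D [HD Heq].
exists (fun a => D (psi X c a)); split; first exact: IH.
by move=> a Hab; rewrite Heq ?psi_U //; exact: psi_disj.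
Qed.

Definition fslt (n : nat) (a : FS) : FS := psi (fun x => x < n) fs0 a.

Definition wf (n : nat) (u : FS -> G) : FS -> G :=
  fun a => if fs_mem n a then u (fslt n a) else e.

Lemma P_wf k n u : P k.+1 u -> P k (wf n u).
Proof.
elim/(down_ind (d:=d)): k u => [k Hk|k Hk IH] u Hu.
  apply: P_e => a; rewrite /wf; case: ifP => // _; apply: (P_triv_e _ _ Hu); by rewrite ltnS ltnW.
apply: P_intro => [a|b].
  rewrite /wf; case: ifP => _; last exact: Gs_e.
  apply: (Gs_mono (j := k.+1)) => //; exact: P_val.
case Hnb: (fs_mem n b).
- exists (fun a => u (psi (fun x => x < n) (fslt n b) a)); split; first exact: P_comp.
  move=> a /fs_disjP Hab; rewrite /wf fs_memU Hnb orbT.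
  have -> : fs_mem n a = false by case Hna: (fs_mem n a) => //; rewrite Hab in Hnb.
  by rewrite inv1g gmul1 /fslt psi_comp0.
- case: (P_char Hu (fs_filt (fun x => (x < n) && ~~ fs_mem x fs0) b)) => D [HD Heq].
  exists (wf n D); split; first exact: IH.
  move=> a Hab; rewrite /wf fs_memU Hnb orbF; case: ifP => _; last by rewrite gmulV.
  by rewrite Heq /fslt ?psi_U //; exact: psi_disj.
Qed.

Lemma P_loc k g : (forall n, exists p, P k p /\ forall a, fs_le a n -> g a = p a) -> P k g.
Proof.
elim/(down_ind (d:=d)): k g => [k Hk|k Hk IH] g Hg.
  apply: P_e => a; case: (Hg (fsb a)) => p [Hp Ep]; rewrite Ep ?fs_le_b //; exact: (P_triv_e _ Hk Hp).
apply: P_intro => [a|b].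
  case: (Hg (fsb a)) => p [Hp Ep]; rewrite Ep ?fs_le_b //; exact: P_val.
pose X := fun x => ~~ fs_mem x b.
exists (fun a => ginv (g (psi X fs0 a)) ** g (fsU (psi X fs0 a) b)); split.
  apply: (IH k.+1 (ltnSn k)) => n.
  case: (Hg (maxn n (fsb b))) => p [Hp Ep].
  case: (P_char Hp b) => D [HD EqD].
  exists (fun a => D (psi X fs0 a)); split; first exact: P_comp.
  move=> a Ha.
  have Hle : fs_le (psi X fs0 a) (maxn n (fsb b)).
    apply: fs_le_psi => //; apply: fs_le_mono Ha; exact: leq_maxl.
  have Hb : fs_le b (maxn n (fsb b)) by apply: fs_le_mono (fs_le_b b); exact: leq_maxr.
  rewrite EqD; last first.
    apply/fs_disjP => x; rewrite psi_mem fs_mem0 orbF /X => /andP[H _]; exact: negbTE.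
  rewrite !Ep //; exact: fs_leU.
move=> a /fs_disjP Hab; rewrite psi_id // => x Hx; rewrite /X Hab //.
Qed.

Fixpoint rpr (w : nat -> FS -> G) (n : nat) (a : FS) : G :=
  match n with 0 => e | n'.+1 => w n'.+1 a ** rpr w n' a end.

Lemma P_rpr k w n : (forall m, P k (w m)) -> P k (rpr w n).
Proof.
move=> Hw; elim: n => [|n IH] /=; first exact: P_const (Gs_e _).
exact: (P_mul (Hw n.+1) IH).
Qed.

Definition RS (u : nat -> FS -> G) (a : FS) : G := rpr (fun n => wf n (u n)) (fsb a) a.

Lemma rpr_stable u a m n : fs_le a m -> m <= n ->
  rpr (fun n => wf n (u n)) n a = rpr (fun n => wf n (u n)) m a.
Proof.
move=> Ha; elim: n => [|n IH] Hmn; first by rewrite leqn0 in Hmn; move/eqP: Hmn => ->.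
case: (ltnP m n.+1) => Hm; last first.
  by have -> : n.+1 = m by apply/eqP; rewrite eqn_leq Hm Hmn.
rewrite /= -IH // /wf.
have -> : fs_mem n.+1 a = false.
  case Hn: (fs_mem n.+1 a) => //; have := fs_le_memP Ha Hn; by rewrite leqNgt Hm.
by rewrite gmul1.
Qed.

Lemma P_RS k u : (forall n, P k.+1 (u n)) -> P k (RS u).
Proof.
move=> Hu; apply: P_loc => n; exists (rpr (fun n => wf n (u n)) n); split.
  apply: P_rpr => m; exact: P_wf.
move=> a Ha; rewrite /RS; symmetry; apply: rpr_stable; [exact: fs_le_b | exact: fsb_le].
Qed.


Definition NG r (Gam : G -> Prop) x := exists n g, Gs r n /\ Gam g /\ x = n ** g.

Lemma NG_mul r Gam : is_subgroup Gam -> forall x y, NG r Gam x -> NG r Gam y -> NG r Gam (x ** y).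
Proof.
case=> _ [GM _] x y [n1 [g1 [Hn1 [Hg1 ->]]]] [n2 [g2 [Hn2 [Hg2 ->]]]].
exists (n1 ** (ginv (ginv g1) ** n2 ** ginv g1)), (g1 ** g2); split.
  apply: Gs_mul => //; exact: Gs_conj.
split; [exact: GM | gnorm; reflexivity].
Qed.

Lemma NG_inv r Gam : is_subgroup Gam -> forall x, NG r Gam x -> NG r Gam (ginv x).
Proof.
case=> _ [_ GI] x [n [g [Hn [Hg ->]]]].
exists (ginv g ** ginv n ** g), (ginv g); split; first by apply: Gs_conj; apply: Gs_inv.
split; [exact: GI | gnorm; reflexivity].
Qed.

Lemma Q_lift (r : nat) (Gam : G -> Prop) (HGam : is_subgroup Gam) (Hr : r <= d) :
  forall k f, P k f -> (forall a, NG r Gam (f a)) ->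
  exists rho, P k rho /\ (forall a, Gam (rho a)) /\ forall a, Gs r (f a ** rho a).
Proof.
have HGam' := HGam; case: HGam' => G1 [GM GI].
have triv : forall k f, r <= k -> P k f ->
    exists rho, P k rho /\ (forall a, Gam (rho a)) /\ forall a, Gs r (f a ** rho a).
  move=> k f Hrk Hf; exists (fun _ => e); split; first exact: P_const (Gs_e _).
  split=> // a; rewrite mulg1; apply: (Gs_mono Hrk); exact: P_val.
move=> k; elim/(down_ind (d:=d)): k => [k Hk|k Hk IH] f Hf HNG.
  apply: triv Hf; exact: leq_trans Hr (ltnW Hk).
case: (leqP r k) => Hrk; first exact: triv Hf.
have Hra : forall a, exists ra, P k.+1 ra /\ (forall x, Gam (ra x)) /\
    forall x, fs_mem a x = false -> Gs r (ginv (f x) ** f (fsU x (fs1 a)) ** ra x).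
  move=> a; case: (P_char Hf (fs1 a)) => D [HD EqD].
  pose X := fun x => ~~ fs_mem x (fs1 a).
  have HF : P k.+1 (fun x => D (psi X fs0 x)) by exact: P_comp.
  have HFv : forall x, D (psi X fs0 x) = ginv (f (psi X fs0 x)) ** f (fsU (psi X fs0 x) (fs1 a)).
    move=> x; apply: EqD; apply/fs_disjP => y; rewrite psi_mem fs_mem0 orbF => /andP[Hy _].
    exact: negbTE.
  have HNGF : forall x, NG r Gam (D (psi X fs0 x)).
    move=> x; rewrite HFv; apply: (NG_mul HGam); [apply: (NG_inv HGam); exact: HNG | exact: HNG].
  case: (IH k.+1 (ltnSn k) _ HF HNGF) => ra [Hr1 [Hr2 Hr3]].
  exists ra; split => //; split => // x Hax; have := Hr3 x; rewrite HFv psi_id //.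
  move=> y Hy; rewrite /X fs_mem1; apply/negP => /andP[_ /eqP Ey].
  by rewrite -Ey Hy in Hax.
have [rs Hrs] : exists rs : nat -> FS -> G, forall a, P k.+1 (rs a) /\ (forall x, Gam (rs a x)) /\
    forall x, fs_mem a x = false -> Gs r (ginv (f x) ** f (fsU x (fs1 a)) ** rs a x).
  exists (fun a => proj1_sig (constructive_indefinite_description _ (Hra a))).
  move=> a; exact: (proj2_sig (constructive_indefinite_description _ (Hra a))).
case: (HNG fs0) => n0 [g0 [Hn0 [Hg0 Ef0]]].
exists (pmul (RS rs) (fun _ => ginv g0)); split.
  apply: P_mul; first by apply: P_RS => n; case: (Hrs n).
  apply: P_const; apply: Gs_inv.
  have -> : g0 = ginv n0 ** f fs0 by rewrite Ef0 mulKg.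
  apply: Gs_mul; last exact: P_val.
  apply: Gs_inv; exact: Gs_mono (ltnW Hrk) Hn0.
have HGr : forall n a, Gam (rpr (fun n => wf n (rs n)) n a).
  elim=> [|n IHn] a /=; first exact: G1.
  apply: GM => //; rewrite /wf; case: ifP => _ //; by case: (Hrs n.+1) => _ [H _].
split=> [a|a]; first by apply: GM; [exact: HGr | exact: GI].
have Htel : forall n a, Gs r (f (psi (fun x => x <= n) fs0 a) **
                              (rpr (fun n => wf n (rs n)) n a ** ginv g0)).
  elim=> [|n IHn] b /=.
    have -> : psi (fun x => x <= 0) fs0 b = fs0.
      apply: fs_ext => x; rewrite psi_mem fs_mem0 orbF.
      case Hx: (fs_mem x b); rewrite ?andbF //; have := fs_pos Hx; by case: x {Hx}.
    rewrite Ef0; have -> : n0 ** g0 ** (e ** ginv g0) = n0 by gnorm.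
    exact: Hn0.
  set x := psi (fun x => x <= n) fs0 b.
  have Hnx : fs_mem n.+1 x = false by rewrite /x psi_mem fs_mem0 orbF ltnn.
  rewrite /wf; case Hb: (fs_mem n.+1 b).
    have E1 : psi (fun y => y <= n.+1) fs0 b = fsU x (fs1 n.+1).
      apply: fs_ext => y; rewrite fs_memU !psi_mem fs_mem1 !fs_mem0 !orbF /=.
      rewrite leq_eqVlt ltnS; case: eqP => [->|_] /=; by rewrite ?Hb ?orbT ?orbF.
    have E2 : fslt n.+1 b = x.
      apply: fs_ext => y; by rewrite /fslt /x !psi_mem ltnS.
    rewrite E1 E2.
    case: (Hrs n.+1) => _ [_ H3]; have Hm := H3 x Hnx.
    set m := ginv (f x) ** f (fsU x (fs1 n.+1)) ** rs n.+1 x in Hm.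
    have -> : f (fsU x (fs1 n.+1)) ** (rs n.+1 x ** rpr (fun n => wf n (rs n)) n b ** ginv g0)
        = (ginv (ginv (f x)) ** m ** ginv (f x)) ** (f x ** (rpr (fun n => wf n (rs n)) n b ** ginv g0)).
      by rewrite /m; gnorm.
    apply: Gs_mul; [exact: Gs_conj | exact: IHn].
  have E : psi (fun y => y <= n.+1) fs0 b = x.
    apply: fs_ext => y; rewrite !psi_mem !fs_mem0 !orbF.
    rewrite leq_eqVlt ltnS; case: eqP => [->|_] /=; by rewrite ?Hb ?andbF.
  rewrite E gmul1; exact: IHn.
have := Htel (fsb a) a; rewrite psi_id //.
move=> y Hy; exact: fs_le_memP (fs_le_b a) _ Hy.
Qed.

Definition Gtf r := fun i => if i <= r then Gs r else Gs i.

Lemma T_lift (r : nat) (Hr : r <= d) :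
  forall k g, P k g -> (forall a, Gs r (g a)) -> poly (fun i => Gtf r (i + k)) g.
Proof.
move=> k; elim/(down_ind (d:=d)): k => [k Hk|k Hk IH] g Hg Hgr.
  have Hkr : (k <= r) = false by apply/negbTE; rewrite -ltnNge; exact: leq_ltn_trans Hr Hk.
  apply: poly_triv => [x|a]; last exact: (P_triv_e _ Hk Hg).
  rewrite /Gtf add0n Hkr; split; [exact: Gs_triv | move->; exact: Gs_e].
apply: poly_step => [a|b].
  rewrite /Gtf add0n; case: ifP => _; [exact: Hgr | exact: P_val].
case: (P_char Hg b) => D [HD EqD].
pose X := fun x => ~~ fs_mem x b.
have Hdis : forall a, fs_disjoint (psi X fs0 a) b.
  move=> a; apply/fs_disjP => y; rewrite psi_mem fs_mem0 orbF => /andP[Hy _]; exact: negbTE.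
exists (fun a => D (psi X fs0 a)); split.
  have -> : (fun i => Gtf r (i.+1 + k)) = (fun i => Gtf r (i + k.+1)).
    apply: functional_extensionality => i; by rewrite addSnnS.
  apply: (IH k.+1 (ltnSn k)); first exact: P_comp.
  move=> a; rewrite EqD //; apply: Gs_mul; [apply: Gs_inv|]; exact: Hgr.
move=> a Hab; rewrite psi_id; first exact: EqD.
move=> y Hy; move/fs_disjP: Hab => H; by rewrite /X H.
Qed.

End Filt.

Theorem lemma5p2 (G : group) (opens : (G -> Prop) -> Prop)
  (Gs : nat -> G -> Prop) (Gam : G -> Prop) (d r : nat) :
  nilmanifold opens Gs Gam ->
  prefiltration_length Gs d ->
  r <= d ->
  let Gt := fun i => if i <= r then Gs r else Gs i in
  let Gamt := fun x => Gs r x /\ Gam x in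
  let iota := coset_incl Gam in
  (* the map lands in the polynomial maps with values in G_r Γ *)
  (forall hbar, poly_quot Gt Gamt hbar ->
     poly_quot Gs Gam (fun a => iota (hbar a)) /\
     forall a, exists g, Gs r g /\ iota (hbar a) = coset Gam g) /\
  (* injectivity *)
  (forall h1 h2, poly_quot Gt Gamt h1 -> poly_quot Gt Gamt h2 ->
     (fun a => iota (h1 a)) = (fun a => iota (h2 a)) -> h1 = h2) /\
  (* surjectivity *)
  (forall fbar, poly_quot Gs Gam fbar ->
     (forall a, exists g, Gs r g /\ fbar a = coset Gam g) ->
     exists hbar, poly_quot Gt Gamt hbar /\ (fun a => iota (hbar a)) = fbar).
Proof.
move=> Hnil Hlen Hr; cbv zeta.
case: Hnil => _ [HG [HGam _]].
case: Hlen => Hd _.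
have HGam' := HGam; case: HGam' => G1 [GM GI].
have HGamt : is_subgroup (fun x => Gs r x /\ Gam x).
  split; first by split; [exact: Gs_e | exact: G1].
  split; first by move=> x y [Hx1 Hx2] [Hy1 Hy2]; split; [exact: Gs_mul | exact: GM].
  by move=> x [Hx1 Hx2]; split; [exact: Gs_inv | exact: GI].
have coset_shift : forall (L : G -> Prop), is_subgroup L -> forall y l, L l ->
    coset L (gmul y l) = coset L y.
  move=> L [L1 [LM LI]] y l Hl; apply: functional_extensionality => x.
  apply: propositional_extensionality; split.
  - case=> l' [Hl' ->]; exists (gmul l l'); split; [exact: LM | by rewrite gmulA].
  - case=> l' [Hl' ->]; exists (gmul (ginv l) l'); split; first by apply: LM => //; exact: LI.
    gnorm; reflexivity.
have coset_self : forall (L : G -> Prop), is_subgroup L -> forall y, coset L y y.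
  move=> L [L1 _] y; exists (gone G); split => //; by rewrite mulg1.
have iotaE : forall y, coset_incl Gam (coset (fun x => Gs r x /\ Gam x) y) = coset Gam y.
  move=> y; apply: functional_extensionality => x; apply: propositional_extensionality; split.
  - case=> y' [[l [[_ Hl] ->]] [l' [Hl' ->]]]; exists (gmul l l'); split; [exact: GM | by rewrite gmulA].
  - case=> l [Hl ->]; exists y; split; first exact: coset_self HGamt y.
    by exists l.
have valGt : forall g, poly (fun i => if i <= r then Gs r else Gs i) g -> forall a, Gs r (g a).
  move=> g Hg a; case: (poly_cases Hg) => [[_ H2]|[H1 _]]; first by rewrite H2; exact: Gs_e.
  exact: H1.
have E0 : (fun i => Gs (i + 0)) = Gs by apply: functional_extensionality => i; rewrite addn0.
split.
  move=> hbar [h [Hh Hbar]].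
  have HP : poly Gs h.
    have := poly_to_P HG Hd Hh (b := 0); rewrite /P E0; apply => i x.
    rewrite addn0; case: ifP => Hi //; exact: Gs_mono.
  split; first by exists h; split => // a; rewrite Hbar iotaE.
  move=> a; exists (h a); split; first exact: valGt.
  by rewrite Hbar iotaE.
split.
  move=> h1 h2 [g1 [Hg1 E1]] [g2 [Hg2 E2]] Heq; apply: functional_extensionality => a.
  have Ha := congr1 (fun F => F a) Heq; rewrite /= E1 E2 !iotaE in Ha.
  have : coset Gam (g1 a) (g2 a) by rewrite Ha; exact: coset_self.
  case=> l [Hl El]; rewrite E1 E2 El coset_shift //; split => //.
  have -> : l = gmul (ginv (g1 a)) (g2 a) by rewrite El mulKg.
  apply: Gs_mul => //; [apply: Gs_inv => //|]; exact: valGt.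
move=> fbar [f [Hf Ef]] Hval.
have HPf : P Gs 0 f by rewrite /P E0.
have HNG : forall a, NG Gs r Gam (f a).
  move=> a; case: (Hval a) => g [Hg Eg].
  have : coset Gam g (f a) by rewrite -Eg Ef; exact: coset_self.
  case=> l [Hl ->]; by exists g, l.
case: (Q_lift HG Hd HGam Hr HPf HNG) => rho [Hrho [Hrg Hrn]].
have Hh : P Gs 0 (pmul f rho) := P_mul HG Hd HPf Hrho.
have Ht := T_lift HG Hd Hr Hh Hrn.
exists (fun a => coset (fun x => Gs r x /\ Gam x) (pmul f rho a)); split.
  exists (pmul f rho); split => //.
  have E1 : (fun i => Gtf Gs r (i + 0)) = (fun i => if i <= r then Gs r else Gs i).
    apply: functional_extensionality => i; by rewrite addn0.
  by rewrite -E1.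
apply: functional_extensionality => a; rewrite iotaE Ef /pmul coset_shift //.
Qed.
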